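(* Let $m \geq 2$ be an integer and let $p=(p_1,\dots,p_m)$ be a probability distribution on $\{1,\dots,m\}$. Throw balls one at a time independently into $m$ bins, each ball landing in bin $i$ with probability $p_i$. Let $k \geq 1$ be an integer and let $T_k$ be the number of balls thrown until some bin first contains $k$ balls. Define $n^* = \frac{k}{\|p\|_k}$, where $\|p\|_k = \left(\sum_{i=1}^m p_i^k\right)^{1/k}$. Then for every $\delta \in (0,1)$: \[ \Pr\left[T_k \leq \left(\tfrac{\delta}{e}\right) n^*\right] \leq \delta \] and \[ \Pr\left[T_k \leq \max\left\{e^2,\ 2\ln(\tfrac{1}{\delta})\right\} n^*\right] \geq 1-\delta. \]
   Context: Equivalently, $T_k$ is the smallest $n$ such that after $n$ balls the maximum load over all bins is at least $k$. *)

(* Defs.v *)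
From HB Require Import structures.
From mathcomp Require Import all_boot all_order all_algebra.
From mathcomp Require Import all_classical all_reals all_analysis.
Set Implicit Arguments. Unset Strict Implicit. Unset Printing Implicit Defensive.
Import Order.TTheory GRing.Theory Num.Theory.
Local Open Scope ring_scope.

(* Balls into bins: an outcome of throwing n balls into m bins is a function
   f : 'I_n -> 'I_m (ball j lands in bin f j); its probability is
   \prod_j p (f j) (independent throws). *)

Definition load (m n : nat) (f : {ffun 'I_n -> 'I_m}) (i : 'I_m) : nat :=
  #|[set j | f j == i]|.

(* Pr[ max load after n balls >= k ]  =  Pr[ T_k <= n ] *)
Definition prob_maxload_ge (R : realType) (m : nat) (p : 'I_m -> R) (k n : nat) : R :=
  \sum_(f : {ffun 'I_n -> 'I_m} | [exists i, k <= load f i]%N) \prod_(j < n) p (f j).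

(* Pr[ T_k <= x ] for a real threshold x: since T_k is a positive integer,
   T_k <= x  iff  T_k <= floor x (and is impossible for x < 1 when k >= 1;
   truncn x = 0 for x < 0). *)
Definition prob_Tk_le (R : realType) (m : nat) (p : 'I_m -> R) (k : nat) (x : R) : R :=
  prob_maxload_ge p k (Num.truncn x).

Definition knorm (R : realType) (m : nat) (p : 'I_m -> R) (k : nat) : R :=
  powR (\sum_(i < m) p i ^+ k) (k%:R)^-1.

Definition nstar (R : realType) (m : nat) (p : 'I_m -> R) (k : nat) : R :=
  k%:R / knorm p k.

(* Main.v *)
Require Import Defs.
From HB Require Import structures.
From mathcomp Require Import all_boot all_order all_algebra.
From mathcomp Require Import all_classical all_reals all_analysis.
From mathcomp Require Import zify ring lra.
Import Order.TTheory GRing.Theory Num.Theory.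
Local Open Scope ring_scope.


Section DerivProd.
Variable R : realType.
Lemma deriv_prod n (F : 'I_n -> {poly R}) :
  (\prod_(i < n) F i)^`() =
  \sum_(i < n) \prod_(j < n) (if j == i then (F j)^`() else F j).
Proof.
elim: n F => [|n IH] F; first by rewrite big_ord0 big_ord0 derivC.
rewrite big_ord_recr derivM IH /= [RHS]big_ord_recr /= mulr_suml.
congr (_ + _).
  apply: eq_bigr => i _.
  rewrite [in RHS]big_ord_recr /=.
  rewrite (_ : (ord_max == widen_ord (leqnSn n) i) = false); last first.
    by apply/negbTE; rewrite neq_ltn /= ltn_ord orbT.
  by [].
rewrite [in RHS]big_ord_recr /= eqxx; congr (_ * _); apply: eq_bigr => j _.
by rewrite (_ : (widen_ord (leqnSn n) j == ord_max) = false) //; apply/negbTE; rewrite neq_ltn /= ltn_ord.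
Qed.
End DerivProd.

Section Comb.
Variable R : realType.
Variable m : nat.
Variable p : 'I_m -> R.
Hypothesis p_ge0 : forall i, 0 <= p i.
Hypothesis p_sum1 : \sum_(i < m) p i = 1.

Lemma total_mass n : \sum_(f : {ffun 'I_n -> 'I_m}) \prod_(j < n) p (f j) = 1.
Proof.
rewrite -(bigA_distr_bigA (fun (j : 'I_n) (i : 'I_m) => p i)) /=.
by rewrite big1 // => j _; rewrite p_sum1.
Qed.

Definition okc {n} (cap : 'I_m -> nat) (f : {ffun 'I_n -> 'I_m}) :=
  [forall i, (load f i < cap i)%N].
Definition PP n cap := \sum_(f : {ffun 'I_n -> 'I_m} | okc cap f) \prod_(j < n) p (f j).
Definition capm (i : 'I_m) (cap : 'I_m -> nat) :=
  fun i' => if i' == i then (cap i').-1 else cap i'.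
Definition ffcons {n} (i : 'I_m) (g : {ffun 'I_n -> 'I_m}) : {ffun 'I_n.+1 -> 'I_m} :=
  [ffun j => if unlift ord0 j is Some j' then g j' else i].
Definition fftail {n} (f : {ffun 'I_n.+1 -> 'I_m}) : {ffun 'I_n -> 'I_m} :=
  [ffun j => f (lift ord0 j)].

Lemma ffcons0 n i (g : {ffun 'I_n -> 'I_m}) : ffcons i g ord0 = i.
Proof. by rewrite ffunE unlift_none. Qed.
Lemma ffconsS n i (g : {ffun 'I_n -> 'I_m}) j : ffcons i g (lift ord0 j) = g j.
Proof. by rewrite ffunE liftK. Qed.
Lemma fftail_cons n i (g : {ffun 'I_n -> 'I_m}) : fftail (ffcons i g) = g.
Proof. by apply/ffunP => j; rewrite ffunE ffconsS. Qed.
Lemma ffcons_tail n (f : {ffun 'I_n.+1 -> 'I_m}) : ffcons (f ord0) (fftail f) = f.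
Proof.
apply/ffunP => j; rewrite ffunE; case: unliftP => [j' ->|->] //.
by rewrite ffunE.
Qed.

Lemma loadE n (f : {ffun 'I_n -> 'I_m}) i : load f i = (\sum_(j < n) (f j == i))%N.
Proof.
rewrite /load cardsE -sum1_card big_mkcond /=.
apply: eq_bigr => j _; have -> : (j \in (fun x : 'I_n => eqn (f x) i)) = (f j == i) by []. by case: (f j == i).
Qed.

Lemma load_cons n i (g : {ffun 'I_n -> 'I_m}) i' :
  load (ffcons i g) i' = ((i == i') + load g i')%N.
Proof.
rewrite !loadE big_ord_recl ffcons0; congr (_ + _)%N.
by apply: eq_bigr => j _; rewrite ffconsS.
Qed.

Lemma okc_cons n cap i (g : {ffun 'I_n -> 'I_m}) :
  okc cap (ffcons i g) = okc (capm i cap) g.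
Proof.
apply/forallP/forallP => H i'; have := H i'; rewrite load_cons /capm.
  by case: (eqVneq i' i) => [->|ne] /=; lia.
case: (eqVneq i' i) => [->|ne] /=; first lia.
by rewrite add0n.
Qed.

Lemma PP_S n cap : PP n.+1 cap = \sum_(i < m) p i * PP n (capm i cap).
Proof.
rewrite /PP (partition_big (fun f : {ffun 'I_n.+1 -> 'I_m} => f ord0) xpredT) //=.
apply: eq_bigr => i _; rewrite mulr_sumr.
rewrite (reindex_onto (@ffcons n i) (@fftail n)); last first.
  by move=> f /andP[_ /eqP <-]; rewrite ffcons_tail.
apply: eq_big => [g|g _].
  by rewrite okc_cons ffcons0 eqxx fftail_cons eqxx !andbT.
by rewrite big_ord_recl ffcons0; congr (_ * _); apply: eq_bigr => j _; rewrite ffconsS.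
Qed.

Lemma PP_ge0 n cap : 0 <= PP n cap.
Proof. by apply: sumr_ge0 => f _; apply: prodr_ge0 => j _. Qed.

Lemma PP_mono_cap n cap cap' : (forall i, cap i <= cap' i)%N -> PP n cap <= PP n cap'.
Proof.
move=> H; rewrite /PP [leRHS]big_mkcond [leLHS]big_mkcond /=; apply: ler_sum => f _.
case Hf: (okc cap f).
  have -> : okc cap' f by apply/forallP => i; move/forallP: Hf => /(_ i) Hi; apply: leq_trans Hi (H i).
  by [].
by case: (okc cap' f) => //; apply: prodr_ge0.
Qed.

Lemma PP_S_le n cap : PP n.+1 cap <= PP n cap.
Proof.
rewrite PP_S -[leRHS]mul1r -p_sum1 mulr_suml; apply: ler_sum => i _.
apply: ler_wpM2l => //; apply: PP_mono_cap => i'; rewrite /capm.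
by case: (i' == i) => //; apply: leq_pred.
Qed.

Lemma PP_le n N cap : (N <= n)%N -> PP n cap <= PP N cap.
Proof.
elim: n => [|n IH]; first by rewrite leqn0 => /eqP ->.
rewrite leq_eqVlt => /orP[/eqP -> //|]; rewrite ltnS => /IH.
by apply: le_trans; apply: PP_S_le.
Qed.

Lemma prob_PP k n : prob_maxload_ge p k n = 1 - PP n (fun _ => k).
Proof.
rewrite -(total_mass n) (bigID (fun f : {ffun 'I_n -> 'I_m} => [exists i, k <= load f i]%N)) /=.
have -> : \sum_(f : {ffun 'I_n -> 'I_m} | ~~ [exists i, k <= load f i]%N) \prod_(j < n) p (f j)
   = PP n (fun _ => k).
  apply: eq_bigl => f; rewrite /okc negb_exists; apply: eq_forallb => i; by rewrite -ltnNge.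
by rewrite addrK.
Qed.

Definition Fp (i : 'I_m) (c : nat) : {poly R} := \sum_(l < c) (p i ^+ l / (l`!)%:R) *: 'X^l.
Definition Gp (cap : 'I_m -> nat) := \prod_(i < m) Fp i (cap i).

Lemma coef_Fp i c j : (Fp i c)`_j = if (j < c)%N then p i ^+ j / (j`!)%:R else 0.
Proof.
rewrite /Fp coef_sum.
under eq_bigr do rewrite coefZ coefXn.
case: ltnP => jc.
  rewrite (bigD1 (Ordinal jc)) //= eqxx mulr1 big1 ?addr0 // => l nl.
  rewrite (_ : (j == l) = false) ?mulr0 //; apply/negbTE; apply: contra nl => /eqP jl.
  by apply/eqP/val_inj => /=; rewrite jl.
apply: big1 => l _; rewrite (_ : (j == l) = false) ?mulr0 //; apply/negbTE.
by rewrite neq_ltn (leq_trans (ltn_ord l) jc) orbT.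
Qed.

Lemma deriv_Fp i c : (Fp i c)^`() = p i *: Fp i c.-1.
Proof.
apply/polyP => j; rewrite coef_deriv coefZ !coef_Fp.
case: c => [|c] /=; first by rewrite mulr0 mul0rn.
rewrite ltnS; case: ltnP => jc; last by rewrite mulr0 mul0rn.
rewrite factS natrM exprS -mulr_natr.
have h1 : (j`!)%:R != 0 :> R by rewrite pnatr_eq0 -lt0n fact_gt0.
have h2 : (j.+1)%:R != 0 :> R by rewrite pnatr_eq0.
rewrite mul1r -[_ *+ j.+1]mulr_natr; field; by rewrite h1 /= addrC natr1.
Qed.

Lemma deriv_Gp cap : (Gp cap)^`() = \sum_(i < m) p i *: Gp (capm i cap).
Proof.
rewrite /Gp deriv_prod; apply: eq_bigr => i _.
under eq_bigr do rewrite deriv_Fp.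
rewrite (bigD1 i) //= eqxx [in RHS](bigD1 i) //= /capm eqxx -scalerAl; congr (_ *: (_ * _)).
by apply: eq_bigr => j /negbTE ->.
Qed.

Lemma coef_Gp N cap : (Gp cap)`_N = PP N cap / (N`!)%:R.
Proof.
elim: N cap => [|N IH] cap.
  rewrite fact0 divr1 -horner_coef0 /Gp horner_prod.
  under eq_bigr do rewrite horner_coef0 coef_Fp expr0 fact0 divr1.
  rewrite /PP; under [RHS]eq_bigr do rewrite big_ord0.
  have okE : forall f : {ffun 'I_0 -> 'I_m}, okc cap f = [forall i, (0 < cap i)%N].
    move=> f; apply: eq_forallb => i; by rewrite loadE big_ord0.
  case: (boolP [forall i, (0 < cap i)%N]) => H.
    rewrite big1; last by move=> i _; move/forallP: H => /(_ i) ->.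
    under [RHS]eq_bigl do rewrite okE H.
    by rewrite sumr_const card_ffun !card_ord expn0.
  under [RHS]eq_bigl do rewrite okE (negbTE H).
  rewrite [RHS]big_pred0 //; move: H; rewrite negb_forall => /existsP[i].
  rewrite -leqNgt leqn0 => /eqP ci.
  by rewrite (bigD1 i) //= ci /= mul0r.
have := coef_deriv (Gp cap) N.
rewrite deriv_Gp coef_sum.
under eq_bigr do rewrite coefZ IH.
under eq_bigr do rewrite mulrA; rewrite -mulr_suml -PP_S => E.
have h1 : (N`!)%:R != 0 :> R by rewrite pnatr_eq0 -lt0n fact_gt0.
have h2 : (N.+1)%:R != 0 :> R by rewrite pnatr_eq0.
rewrite factS natrM.
apply: (mulIf h2); rewrite [LHS]mulr_natr -E; field; by rewrite h1 /= addrC natr1.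
Qed.

Lemma Fp_horner i c t : (Fp i c).[t] = \sum_(l < c) (p i * t) ^+ l / (l`!)%:R.
Proof.
rewrite /Fp horner_sum; apply: eq_bigr => l _.
by rewrite hornerZ hornerXn exprMn mulrAC.
Qed.

Lemma PP_sum_le cap t n : 0 <= t ->
  \sum_(N < n.+1) PP N cap / (N`!)%:R * t ^+ N <= (Gp cap).[t].
Proof.
move=> t0.
rewrite (@horner_coef_wide _ (maxn (size (Gp cap)) n.+1)) ?leq_maxl //.
rewrite (big_ord_widen (maxn (size (Gp cap)) n.+1) (fun N => PP N cap / (N`!)%:R * t ^+ N)) ?leq_maxr //.
rewrite big_mkcond /=; apply: ler_sum => i _; rewrite coef_Gp.
case: ifP => // _; apply: mulr_ge0; last exact: exprn_ge0.
by apply: divr_ge0; [apply: PP_ge0|].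
Qed.


Lemma prob_ffun_ge0 n (f : {ffun 'I_n -> 'I_m}) : 0 <= \prod_(j < n) p (f j).
Proof. by apply: prodr_ge0. Qed.

Lemma sub_mass n (i : 'I_m) (S : {set 'I_n}) :
  \sum_(f : {ffun 'I_n -> 'I_m}) (S \subset [set j | f j == i])%:R * \prod_(j < n) p (f j)
  = p i ^+ #|S|.
Proof.
pose w (j : 'I_n) (x : 'I_m) := if j \in S then (x == i)%:R * p x else p x.
transitivity (\sum_(f : {ffun 'I_n -> 'I_m}) \prod_(j < n) w j (f j)).
  apply: eq_bigr => f _; case: (boolP (S \subset [set j | f j == i])) => H.
    rewrite mul1r; apply: eq_bigr => j _; rewrite /w; case: ifP => // jS.
    by move/fintype.subsetP: H => /(_ j jS); rewrite inE => ->; rewrite mul1r.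
  rewrite mul0r; case/subsetPn: H => j jS; rewrite inE => /negbTE fj.
  by rewrite (bigD1 j) //= /w jS fj mul0r mul0r.
rewrite -(bigA_distr_bigA w) /=.
transitivity (\prod_(j < n) (if j \in S then p i else 1)).
  apply: eq_bigr => j _; rewrite /w; case: ifP => jS.
    rewrite (bigD1 i) //= eqxx mul1r big1 ?addr0 // => x /negbTE ->.
    by rewrite mul0r.
  by rewrite p_sum1.
by rewrite -big_mkcond prodr_const.
Qed.

Lemma bin_tail_le (i : 'I_m) k n :
  \sum_(f : {ffun 'I_n -> 'I_m} | (k <= load f i)%N) \prod_(j < n) p (f j)
  <= 'C(n, k)%:R * p i ^+ k.
Proof.
apply: (@le_trans _ _ (\sum_(f : {ffun 'I_n -> 'I_m})
    \sum_(S : {set 'I_n} | #|S| == k)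
      (S \subset [set j | f j == i])%:R * \prod_(j < n) p (f j))).
  rewrite big_mkcond /=; apply: ler_sum => f _; case: ifP => H; last first.
    by apply: sumr_ge0 => S _; apply: mulr_ge0 => //; apply: prob_ffun_ge0.
  set A := [set j | f j == i].
  have kA : (k <= #|A|)%N by [].
  pose S := [set x in take k (enum A)].
  have cS : #|S| = k.
    rewrite /S cardsE (card_uniqP _) ?take_uniq ?enum_uniq // size_take -cardE.
    by case: ltnP => //; move: kA; rewrite leq_eqVlt => /orP[/eqP -> //|]; lia.
  have sS : S \subset A.
    by apply/fintype.subsetP => x; rewrite inE => /mem_take; rewrite mem_enum.
  rewrite (bigD1 S) ?cS ?eqxx //= sS mul1r lerDl.
  by apply: sumr_ge0 => T _; apply: mulr_ge0 => //; apply: prob_ffun_ge0.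
rewrite exchange_big /=.
under eq_bigr => S /eqP cS do rewrite sub_mass cS.
rewrite (eq_bigl (fun S => S \in [set S : {set 'I_n} | #|S| == k])); last by move=> S; rewrite inE.
by rewrite sumr_const card_draws card_ord mulr_natl.
Qed.

Lemma prob_union k n :
  prob_maxload_ge p k n <= 'C(n, k)%:R * \sum_(i < m) p i ^+ k.
Proof.
rewrite mulr_sumr /prob_maxload_ge.
apply: (@le_trans _ _ (\sum_(i < m) \sum_(f : {ffun 'I_n -> 'I_m} | (k <= load f i)%N)
  \prod_(j < n) p (f j))); last by apply: ler_sum => i _; apply: bin_tail_le.
rewrite [leRHS](eq_bigr (fun i => \sum_(f : {ffun 'I_n -> 'I_m})
   (if (k <= load f i)%N then \prod_(j < n) p (f j) else 0))); last by move=> i _; rewrite big_mkcond.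
rewrite [leRHS]exchange_big /= big_mkcond /=; apply: ler_sum => f _.
case: ifP => [/existsP[i Hi]|_]; last first.
  by apply: sumr_ge0 => i _; case: ifP => // _; apply: prob_ffun_ge0.
rewrite (bigD1 i) //= Hi lerDl; apply: sumr_ge0 => i' _.
by case: ifP => // _; apply: prob_ffun_ge0.
Qed.

End Comb.


Section Ana.
Variable R : realType.

Definition psum (y : R) (N : nat) := \sum_(l < N) y ^+ l / (l`!)%:R.

Lemma psum_series y N : psum y N = series (exp_coeff y) N.
Proof. by rewrite /psum /series /exp_coeff /= big_mkord. Qed.

Lemma psumS y N : psum y N.+1 = psum y N + y ^+ N / (N`!)%:R.
Proof. by rewrite /psum big_ord_recr. Qed.

Lemma term_ge0 y l : 0 <= y -> 0 <= y ^+ l / (l`!)%:R :> R.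
Proof. by move=> y0; apply: divr_ge0 => //; apply: exprn_ge0. Qed.

Lemma psum_ge0 y N : 0 <= y -> 0 <= psum y N.
Proof. by move=> y0; apply: sumr_ge0 => l _; apply: term_ge0. Qed.

Lemma psum_mono y a b : 0 <= y -> (a <= b)%N -> psum y a <= psum y b.
Proof.
move=> y0; elim: b => [|b IH]; first by rewrite leqn0 => /eqP ->.
rewrite leq_eqVlt => /orP[/eqP -> //|]; rewrite ltnS => /IH h.
by apply: le_trans h _; rewrite psumS lerDl term_ge0.
Qed.

Lemma psum_le_exp y N : 0 <= y -> psum y N <= expR y.
Proof.
move=> y0; rewrite psum_series /expR; apply: nondecreasing_cvgn_le; last exact: is_cvg_series_exp_coeff.
by move=> a b ab; rewrite -!psum_series; apply: psum_mono.
Qed.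

Lemma exp_le_4psum t n : 0 <= t -> t <= 3/4 * n.+1%:R -> expR t <= 4 * psum t n.+1.
Proof.
move=> t0 tn.
pose a l := t ^+ l / (l`!)%:R.
have a_ge0 l : 0 <= a l by apply: term_ge0.
have aS l : (n <= l)%N -> 4 * a l.+1 <= 3 * a l.
  move=> nl.
  have hl : 0 < (l`!)%:R :> R by rewrite ltr0n fact_gt0.
  have hl1 : 0 < (l.+1)%:R :> R by rewrite ltr0n.
  have tl : t <= 3/4 * l.+1%:R.
    by apply: le_trans tn _; rewrite ler_pM2l ?ler_nat //; lra.
  have -> : a l.+1 = (t / l.+1%:R) * a l.
    rewrite /a exprS factS natrM; field.
    by rewrite (lt0r_neq0 hl) /= addrC natr1 (lt0r_neq0 hl1).
  rewrite mulrA; apply: ler_wpM2r => //.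
  rewrite mulrA ler_pdivrMr //; lra.
have inv j : psum t (n + j).+1 + 3 * a (n + j)%N <= psum t n.+1 + 3 * a n.
  elim: j => [|j IH]; first by rewrite !addn0.
  rewrite addnS psumS -/(a _).
  have := aS (n + j)%N (leq_addr _ _); lra.
rewrite /expR; apply: limr_le; first exact: is_cvg_series_exp_coeff.
exists n.+1 => // N /= hN.
rewrite -psum_series.
have [j ->] : exists j, N = (n + j).+1 by exists (N - n.+1)%N; lia.
have h := psumS t n; rewrite -/(a n) in h.
have := inv j; have := a_ge0 (n + j)%N; have := @psum_ge0 t n t0; lra.
Qed.


Definition Ep (k : nat) : {poly R} := \sum_(l < k) ((l`!)%:R)^-1 *: 'X^l.

Lemma Ep_horner k y : (Ep k).[y] = psum y k.
Proof. rewrite /Ep horner_sum; apply: eq_bigr => l _; by rewrite hornerZ hornerXn mulrC. Qed.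

Lemma coef_Ep k j : (Ep k)`_j = if (j < k)%N then ((j`!)%:R)^-1 else 0.
Proof.
rewrite /Ep coef_sum.
under eq_bigr do rewrite coefZ coefXn.
case: ltnP => jc.
  rewrite (bigD1 (Ordinal jc)) //= eqxx mulr1 big1 ?addr0 // => l nl.
  rewrite (_ : (j == l) = false) ?mulr0 //; apply/negbTE; apply: contra nl => /eqP jl.
  by apply/eqP/val_inj => /=; rewrite jl.
apply: big1 => l _; rewrite (_ : (j == l) = false) ?mulr0 //; apply/negbTE.
by rewrite neq_ltn (leq_trans (ltn_ord l) jc) orbT.
Qed.

Lemma deriv_Ep k : (Ep k.+1)^`() = Ep k.
Proof.
apply/polyP => j; rewrite coef_deriv !coef_Ep ltnS; case: ltnP => // jk; last by rewrite mul0rn.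
rewrite factS natrM -mulr_natr.
have h1 : (j`!)%:R != 0 :> R by rewrite pnatr_eq0 -lt0n fact_gt0.
have h2 : (j.+1)%:R != 0 :> R by rewrite pnatr_eq0.
field; by rewrite h1 /= addrC natr1.
Qed.

Variable K : nat.
Definition E y := psum y K.+1.
Definition E1 y := psum y K.
Definition g y := y - ln (E y).

Lemma E_ge1 {y} : 0 <= y -> 1 <= E y.
Proof.
move=> y0; rewrite /E /psum big_ord_recl expr0 fact0 divr1 lerDl.
by apply: sumr_ge0 => l _; exact: term_ge0.
Qed.

Lemma E_gt0 {y} : 0 <= y -> 0 < E y.
Proof. by move=> y0; apply: (lt_le_trans ltr01 (E_ge1 y0)). Qed.

Lemma EE1 y : E y = E1 y + y ^+ K / (K`!)%:R.
Proof. exact: psumS. Qed.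

Lemma E0 : E 0 = 1.
Proof.
rewrite /E /psum big_ord_recl expr0 fact0 divr1 big1 ?addr0 // => l _.
by rewrite expr0n /= mul0r.
Qed.

Lemma is_derive_E (x : R) : is_derive x (1:R) E (E1 x).
Proof.
have -> : E = horner (Ep K.+1) by apply/funext => y; rewrite Ep_horner.
rewrite /E1 -Ep_horner -[Ep K]deriv_Ep; exact: is_derive_poly.
Qed.

Lemma is_derive_g (x : R) : 0 <= x -> is_derive x (1:R) g (1 - (E x)^-1 * E1 x).
Proof.
move=> x0.
have h1 : is_derive (E x) 1 (@ln R) (E x)^-1 := is_derive1_ln (E_gt0 x0).
have h2 := is_derive1_comp h1 (is_derive_E x).
exact: (is_deriveB (is_derive_id x 1) h2).
Qed.

Lemma g_ge0 y : 0 <= y -> 0 <= g y.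
Proof.
move=> y0; rewrite /g subr_ge0.
apply: (@le_trans _ _ (ln (expR y))); last by rewrite expRK.
by rewrite ler_ln ?posrE ?E_gt0 ?expR_gt0 //; apply: psum_le_exp.
Qed.

Lemma g0 : g 0 = 0.
Proof. by rewrite /g E0 ln1 subrr. Qed.


Definition h2 (y : R) : R := (K.+1)`!%:R * (E y * g y) - y ^+ K.+1.

Lemma is_derive_h2 (x : R) : 0 <= x -> is_derive x (1:R) h2 ((K.+1)`!%:R * E1 x * g x).
Proof.
move=> x0.
have d1 := is_deriveM (is_derive_E x) (is_derive_g x x0).
have d2 := is_deriveZ ((K.+1)`!%:R) d1.
have d3 := is_deriveX K.+1 (is_derive_id x (1:R)).
have d4 := is_deriveB d2 d3.
have -> : h2 = ((K.+1)`!%:R \*: (E * g) - id ^+ K.+1).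
  by apply/funext => y; rewrite !fctE /=.
apply: is_derive_eq d4 _.
have sE : forall a b : R, a *: b = a * b by [].
rewrite !sE /= mulr1.
have Ex := E_gt0 x0; rewrite EE1 in Ex *.
have hK : (K`!)%:R != 0 :> R by rewrite pnatr_eq0 -lt0n fact_gt0.
rewrite factS natrM.
have hKp : 0 < (K`!)%:R :> R by rewrite ltr0n fact_gt0.
field; rewrite hK /=; apply: lt0r_neq0; have := mulr_gt0 Ex hKp; by rewrite mulrDl divfK.
Qed.

Lemma dval {f : R -> R} {x d : R} : is_derive x (1:R) f d -> derive1 f x = d.
Proof. by move=> H; rewrite derive1E; apply: (@derive_val _ _ _ _ _ _ _ H). Qed.

Lemma h2_0 : h2 0 = 0.
Proof. by rewrite /h2 g0 mulr0 mulr0 expr0n /= subr0. Qed.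

Lemma h2_ge0 y : 0 <= y -> 0 <= h2 y.
Proof.
move=> y0; rewrite -h2_0.
apply: (@ger0_derive1_le_cc _ h2 0 y); last 3 first.
- by rewrite in_itv /= lexx y0.
- by rewrite in_itv /= lexx y0.
- exact: y0.
- move=> x; rewrite in_itv /= => /andP[x0 _].
  by case: (is_derive_h2 x (ltW x0)).
- move=> x; rewrite in_itv /= => /andP[x0 _].
  rewrite (dval (is_derive_h2 x (ltW x0))).
  apply: mulr_ge0; last by apply: g_ge0; exact: ltW.
  by apply: mulr_ge0; [rewrite ler0n|apply: psum_ge0; exact: ltW].
apply: derivable_within_continuous => x; rewrite in_itv /= => /andP[x0 _].
by case: (is_derive_h2 x x0).
Qed.

Definition Phi (y : R) := g y / y ^+ K.+1.

Lemma is_derive_Phi (x : R) : 0 < x ->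
  is_derive x (1:R) Phi (- h2 x / ((K`!)%:R * E x * x ^+ K.+2)).
Proof.
move=> x0.
have d1 := is_derive_g x (ltW x0).
have d2 := is_deriveX K.+1 (is_derive_id x (1:R)).
have nz : (id ^+ K.+1) x != 0 :> R by rewrite fctE /= expf_neq0 // lt0r_neq0.
have d3 := is_deriveV nz d2.
have d4 := is_deriveM d1 d3.
have -> : Phi = g * (fun y => ((id ^+ K.+1) y)^-1 : R).
  by apply/funext => y; rewrite !fctE /=.
apply: is_derive_eq d4 _.
have sE : forall a b : R, a *: b = a * b by [].
rewrite !sE /= !fctE /= mulr1 /h2.
have Ex := E_gt0 (ltW x0).
have hK : (K`!)%:R != 0 :> R by rewrite pnatr_eq0 -lt0n fact_gt0.
have hKp : 0 < (K`!)%:R :> R by rewrite ltr0n fact_gt0.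
have xn := lt0r_neq0 x0.
have xKn : x ^+ K != 0 by rewrite expf_neq0.
have E1E : E1 x = E x - x ^+ K / (K`!)%:R by rewrite EE1 addrK.
rewrite E1E factS natrM !exprS.
field; by rewrite xKn xn hK (lt0r_neq0 Ex).
Qed.

Lemma Phi_mono {y w} : 0 < y -> y <= w -> Phi w <= Phi y.
Proof.
move=> y0 yw.
apply: (@ler0_derive1_le_cc _ Phi y w); last 3 first.
- by rewrite in_itv /= lexx yw.
- by rewrite in_itv /= lexx yw.
- exact: yw.
- move=> x; rewrite in_itv /= => /andP[yx _].
  by case: (is_derive_Phi x (lt_trans y0 yx)).
- move=> x; rewrite in_itv /= => /andP[yx _].
  have x0 := lt_trans y0 yx.
  rewrite (dval (is_derive_Phi x x0)) mulNr oppr_le0; apply: divr_ge0.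
    by apply: h2_ge0; exact: ltW.
  apply: mulr_ge0; last by apply: exprn_ge0; exact: ltW.
  by apply: mulr_ge0; [rewrite ler0n|apply: ltW; apply: E_gt0; exact: ltW].
apply: derivable_within_continuous => x; rewrite in_itv /= => /andP[yx _].
by case: (is_derive_Phi x (lt_le_trans y0 yx)).
Qed.


Lemma E_le y : 0 <= y -> E y <= expR 1 ^+ K * expR (y / expR 1).
Proof.
move=> y0.
have e0 : 0 < expR 1 :> R by apply: expR_gt0.
have e1 : 1 <= expR 1 :> R by rewrite -expR0 ler_expR.
apply: (@le_trans _ _ (expR 1 ^+ K * psum (y / expR 1) K.+1)); last first.
  apply: ler_wpM2l; first by apply: exprn_ge0; exact: ltW.
  by apply: psum_le_exp; apply: divr_ge0 => //; exact: ltW.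
rewrite /E /psum mulr_sumr; apply: ler_sum => l _.
have el : expR 1 ^+ l <= expR 1 ^+ K :> R.
  by apply: ler_weXn2l => //; rewrite -ltnS.
have elp : 0 < expR 1 ^+ l :> R by apply: exprn_gt0.
have hl : (l`!)%:R != 0 :> R by rewrite pnatr_eq0 -lt0n fact_gt0.
rewrite expr_div_n.
rewrite [X in _ <= X](_ : _ = (expR 1 ^+ K / expR 1 ^+ l) * (y ^+ l / (l`!)%:R)); last first.
  by field; rewrite hl lt0r_neq0.
rewrite -[X in X <= _]mul1r; apply: ler_wpM2r; first exact: term_ge0.
by rewrite ler_pdivlMr // mul1r.
Qed.

Lemma g_lower y : 0 <= y -> (1 - (expR 1)^-1) * y - K%:R <= g y.
Proof.
move=> y0; rewrite /g.
have h := E_le y y0.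
have h' : expR 1 ^+ K * expR (y / expR 1) = expR (K%:R + y / expR 1) :> R.
  by rewrite expRD -expRM_natl mulr1.
rewrite h' in h.
have : ln (E y) <= K%:R + y / expR 1.
  by rewrite -[X in _ <= X]expRK ler_ln ?posrE ?E_gt0 ?expR_gt0.
rewrite mulrBl mul1r mulrC; lra.
Qed.

Lemma sum_g (I : finType) (yv : I -> R) w G :
  (forall i, 0 <= yv i) -> 0 < w -> \sum_i yv i ^+ K.+1 = w ^+ K.+1 -> 0 <= G ->
  (forall z, w <= z -> G <= g z) -> G <= \sum_i g (yv i).
Proof.
move=> y0 w0 sw G0 Gg.
case: (boolP [exists i, w < yv i]) => [/existsP[i wi]|].
  rewrite (bigD1 i) //=; apply: le_trans (Gg _ (ltW wi)) _; rewrite lerDl.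
  by apply: sumr_ge0 => j _; apply: g_ge0.
rewrite negb_exists => /forallP yw.
have wk : 0 < w ^+ K.+1 by apply: exprn_gt0.
have -> : G = \sum_i G * (yv i ^+ K.+1 / w ^+ K.+1).
  by rewrite -mulr_sumr -mulr_suml sw divff ?mulr1 // lt0r_neq0.
apply: ler_sum => i _.
have yi : yv i <= w by move: (yw i); rewrite -leNgt.
case: (eqVneq (yv i) 0) => [->|ne].
  by rewrite expr0n /= mul0r mulr0 g0.
have yp : 0 < yv i by rewrite lt0r ne y0.
have := Phi_mono yp yi; rewrite /Phi => hP.
have hG := Gg w (lexx w).
apply: (@le_trans _ _ (g w * (yv i ^+ K.+1 / w ^+ K.+1))).
  apply: ler_wpM2r => //; apply: divr_ge0; [apply: exprn_ge0; exact: ltW|exact: ltW].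
have -> : g w * (yv i ^+ K.+1 / w ^+ K.+1) = (g w / w ^+ K.+1) * yv i ^+ K.+1.
  by rewrite mulrA mulrAC.
apply: le_trans (ler_wpM2r (exprn_ge0 _ (ltW yp)) hP) _.
by rewrite divfK // expf_neq0.
Qed.

End Ana.

Section NumE.
Variable R : realType.
Lemma e_ge : 27/10 <= expR 1 :> R.
Proof.
apply: le_trans (@psum_le_exp R 1 5 ler01).
rewrite /psum !big_ord_recr big_ord0 /= !expr1n.
rewrite !factS fact0 /=. lra.
Qed.
End NumE.


Lemma ffact_le_exp n k : (n ^_ k <= n ^ k)%N.
Proof.
elim: k => [|k IH]; first by [].
by rewrite ffactnSr expnSr leq_mul // leq_subr.
Qed.

Lemma PP1 (R : realType) (m : nat) (p : 'I_m -> R) n : PP R m p n.+1 (fun _ => 1%N) = 0.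
Proof.
rewrite PP_S; apply: big1 => i _; rewrite /PP big_pred0 ?mulr0 // => f.
apply/negbTE; rewrite /okc negb_forall; apply/existsP; exists i.
by rewrite /capm eqxx.
Qed.


Section Main.
Variable R : realType.
Variable m : nat.
Variable p : 'I_m -> R.
Hypothesis p0 : forall i, 0 <= p i.
Hypothesis p1 : \sum_(i < m) p i = 1.

Lemma nstar_facts k : (1 <= k)%N ->
  0 < \sum_(i < m) p i ^+ k /\ 0 < nstar p k /\
  nstar p k ^+ k * (\sum_(i < m) p i ^+ k) = k%:R ^+ k.
Proof.
move=> k1; set q := \sum_(i < m) p i ^+ k.
have [i0 pi0] : exists i, 0 < p i.
  case: (boolP [exists i, 0 < p i]) => [/existsP[i hi]|]; first by exists i.
  rewrite negb_exists => /forallP H; exfalso.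
  have : \sum_(i < m) p i = 0.
    by apply: big1 => i _; apply/eqP; rewrite eq_le p0 andbT leNgt H.
  by rewrite p1 => /eqP; rewrite oner_eq0.
have q_gt0 : 0 < q.
  rewrite /q (bigD1 i0) //=; apply: (lt_le_trans (exprn_gt0 k pi0)).
  by rewrite lerDl; apply: sumr_ge0 => i _; apply: exprn_ge0.
have kR : 0 < k%:R :> R by rewrite ltr0n.
have kn_gt0 : 0 < knorm p k by rewrite /knorm powR_gt0.
have knK : knorm p k ^+ k = q.
  rewrite /knorm -/q -powR_mulrn ?powR_ge0 // -powRrM mulVf ?powRr1 ?ltW //.
  exact: lt0r_neq0.
have ns_gt0 : 0 < nstar p k by rewrite /nstar divr_gt0.
split => //; split => //.
by rewrite /nstar expr_div_n knK divfK // lt0r_neq0.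
Qed.

Lemma part1 k delta : (1 <= k)%N -> 0 < delta < 1 ->
  prob_Tk_le p k ((delta / expR 1) * nstar p k) <= delta.
Proof.
move=> k1 /andP[d0 d1].
have [q_gt0 [ns_gt0 nsK]] := nstar_facts k k1.
set q := \sum_(i < m) p i ^+ k in q_gt0 nsK *.
have eg := e_ge R.
have e0 : 0 < expR 1 :> R by apply: expR_gt0.
set x := delta / expR 1 * nstar p k.
have x0 : 0 <= x.
  by rewrite /x; apply: mulr_ge0; [apply: mulr_ge0; [exact: ltW|rewrite invr_ge0; exact: ltW]|exact: ltW].
rewrite /prob_Tk_le; set n := Num.truncn x.
have nx : n%:R <= x by case/andP: (truncn_itv x0).
apply: le_trans (prob_union _ _ _ p0 p1 k n) _; rewrite -/q.
have kf : 0 < (k`!)%:R :> R by rewrite ltr0n fact_gt0.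
have Cb : 'C(n, k)%:R * (k`!)%:R <= n%:R ^+ k :> R.
  by rewrite -natrM bin_ffact -natrX ler_nat ffact_le_exp.
have C1 : 'C(n, k)%:R <= n%:R ^+ k / (k`!)%:R :> R by rewrite ler_pdivlMr.
have nk : n%:R ^+ k <= x ^+ k by apply: lerXn2r; rewrite ?nnegrE ?ler0n.
have xq : x ^+ k * q = (delta / expR 1) ^+ k * k%:R ^+ k.
  by rewrite /x exprMn -mulrA nsK.
have kk : k%:R ^+ k / (k`!)%:R <= expR 1 ^+ k :> R.
  rewrite -expRM_natl mulr1.
  apply: le_trans (psum_le_exp _ _ k.+1 (ler0n _ k)).
  by rewrite psumS lerDr; apply: psum_ge0; rewrite ler0n.
apply: (@le_trans _ _ (x ^+ k / (k`!)%:R * q)).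
  apply: ler_wpM2r; first exact: ltW.
  apply: le_trans C1 _; apply: ler_wpM2r => //; rewrite invr_ge0; exact: ltW.
rewrite mulrAC xq -mulrA.
apply: (@le_trans _ _ ((delta / expR 1) ^+ k * expR 1 ^+ k)).
  by apply: ler_wpM2l => //; apply: exprn_ge0; rewrite divr_ge0 // ltW.
rewrite -exprMn divfK ?lt0r_neq0 //.
case: k k1 {q q_gt0 nsK ns_gt0 x x0 n nx kf Cb C1 nk xq kk} => // K _.
rewrite exprS; apply: ler_piMr; first exact: ltW.
by apply: exprn_ile1; rewrite ltW.
Qed.

Lemma part2_1 delta : 0 < delta < 1 ->
  1 - delta <= prob_Tk_le p 1 (Num.max (expR 1 ^+ 2) (2 * ln delta^-1) * nstar p 1).
Proof.
move=> /andP[d0 d1].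
have [q_gt0 [ns_gt0 nsK]] := nstar_facts 1 (leqnn 1).
have q1 : \sum_(i < m) p i ^+ 1 = 1 by rewrite -p1; apply: eq_bigr => i _; rewrite expr1.
rewrite q1 !expr1 mulr1 in nsK.
rewrite nsK mulr1.
set c := Num.max (expR 1 ^+ 2) (2 * ln delta^-1).
have ce : expR 1 ^+ 2 <= c by rewrite le_max lexx.
have eg := e_ge R.
have c_ge : 729/100 <= c by apply: le_trans ce; rewrite expr2; nra.
have x0 : 0 <= c by lra.
rewrite /prob_Tk_le; set n := Num.truncn c.
have hx : c < n.+1%:R by case/andP: (truncn_itv x0).
have npos : (0 < n)%N.
  rewrite lt0n; apply/negP => /eqP n0; move: hx; rewrite n0; lra.
rewrite (prob_PP _ _ _ p1 1 n) -(prednK npos) PP1; lra.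
Qed.

Lemma part2 K delta : 0 < delta < 1 ->
  1 - delta <= prob_Tk_le p K.+2 (Num.max (expR 1 ^+ 2) (2 * ln delta^-1) * nstar p K.+2).
Proof.
move=> /andP[d0 d1].
set k := K.+2.
have k1 : (1 <= k)%N by [].
have [q_gt0 [ns_gt0 nsK]] := nstar_facts k k1.
set q := \sum_(i < m) p i ^+ k in q_gt0 nsK *.
have eg := e_ge R.
have e0 : 0 < expR 1 :> R by apply: expR_gt0.
set c := Num.max (expR 1 ^+ 2) (2 * ln delta^-1).
have ce : expR 1 ^+ 2 <= c by rewrite le_max lexx.
have cl : 2 * ln delta^-1 <= c by rewrite le_max lexx orbT.
have c_ge : 729/100 <= c by apply: le_trans ce; rewrite expr2; nra.
set x := c * nstar p k.
have x0 : 0 <= x by rewrite /x; apply: mulr_ge0; [lra|exact: ltW].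
rewrite /prob_Tk_le; set n := Num.truncn x.
have hx : x < n.+1%:R by case/andP: (truncn_itv x0).
rewrite (prob_PP _ _ _ p1 k n).
suff H : PP R m p n (fun _ => k) <= delta by lra.
set t := 3/4 * x.
have t0 : 0 <= t by rewrite /t; lra.
have ht : t <= 3/4 * n.+1%:R by rewrite /t; lra.
have kR : (2 <= k%:R :> R) by rewrite /k ler_nat.
set w := 3/4 * c * k%:R.
have w0 : 0 < w by rewrite /w; apply: mulr_gt0; lra.
pose yv i := p i * t.
have yv0 i : 0 <= yv i by apply: mulr_ge0.
have sumy : \sum_i yv i ^+ K.+2 = w ^+ K.+2.
  rewrite /yv; under eq_bigr do rewrite exprMn.
  rewrite -mulr_suml -/k -/q /t /x /w (mulrA (3/4)) exprMn [in RHS]exprMn -nsK.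
  by rewrite mulrCA [q * _]mulrC.
have ieb : (expR 1)^-1 <= 10/27 :> R by rewrite -div1r ler_pdivrMr //; lra.
have ie0 : 0 <= (expR 1)^-1 :> R by rewrite invr_ge0 ltW.
set ie := (expR 1)^-1 in ieb ie0 *.
set G := (1 - ie) * w - K.+1%:R.
have kK : k%:R = K.+1%:R + 1 :> R by rewrite /k -[K.+2]addn1 natrD.
have K0 : 0 <= K.+1%:R :> R by rewrite ler0n.
have z2 : 2 <= G - c / 2.
  have h1 : 0 <= (10/27 - ie) * (c * k%:R).
    by apply: mulr_ge0; [lra|apply: mulr_ge0; lra].
  have h2 : 0 <= (c - 729/100) * (17 * k%:R / 36 - 1/2).
    by apply: mulr_ge0; lra.
  rewrite /G /w; lra.
have G0 : 0 <= G by lra.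
have Gg : forall z, w <= z -> G <= g R K.+1 z.
  move=> z wz; have z0 : 0 <= z by lra.
  apply: le_trans (g_lower R K.+1 z z0); rewrite -/ie /G.
  have : 0 <= 1 - ie by lra.
  move=> h; have := ler_wpM2l h wz; lra.
have hsum := sum_g R K.+1 'I_m yv w G yv0 w0 sumy G0 Gg.
have S0 : 0 < psum R t n.+1 by have := @E_gt0 R n t t0.
have h1 := PP_sum_le _ _ _ p0 (fun _ => k) t n t0.
have h2 : PP R m p n (fun _ => k) * psum R t n.+1 <=
    \sum_(N < n.+1) PP R m p N (fun _ => k) / (N`!)%:R * t ^+ N.
  rewrite /psum mulr_sumr; apply: ler_sum => N _.
  rewrite mulrAC -mulrA; apply: ler_wpM2r; first exact: term_ge0.
  by apply: (PP_le _ _ _ p0 p1); rewrite -ltnS ltn_ord.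
have h3 : (Gp R m p (fun _ => k)).[t] = \prod_i E R K.+1 (yv i).
  by rewrite /Gp horner_prod; apply: eq_bigr => i _; rewrite Fp_horner.
have h4 : \prod_i E R K.+1 (yv i) = expR (t - \sum_i g R K.+1 (yv i)).
  have hE : forall i, E R K.+1 (yv i) = expR (yv i - g R K.+1 (yv i)).
    by move=> i; rewrite /g opprB addrC subrK lnK // posrE E_gt0.
  rewrite (eq_bigr _ (fun i _ => hE i)) -expR_sum sumrB; congr (expR (_ - _)).
  by rewrite /yv -mulr_suml p1 mul1r.
have h5 : expR (t - \sum_i g R K.+1 (yv i)) <= expR t * expR (- G).
  by rewrite -expRD ler_expR; lra.
have h6 := exp_le_4psum R t n t0 ht.
have hP : PP R m p n (fun _ => k) <= 4 * expR (- G).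
  rewrite -(ler_pM2r S0); apply: le_trans h2 _; apply: le_trans h1 _.
  rewrite h3 h4; apply: le_trans h5 _.
  rewrite mulrAC; apply: ler_wpM2r; first exact: ltW (expR_gt0 _).
  exact: h6.
apply: le_trans hP _.
have lnd : ln delta^-1 = - ln delta by rewrite lnV // posrE.
have ed : expR (- (c / 2)) <= delta.
  rewrite -[X in _ <= X](@lnK _ delta) ?posrE // ler_expR; lra.
have ez : 4 <= expR (G - c / 2).
  have zz : 0 <= G - c / 2 by lra.
  apply: le_trans (psum_le_exp _ (G - c / 2) 3 zz).
  rewrite /psum !big_ord_recr big_ord0 /= !factS fact0 /=.
  nra.
apply: le_trans ed.
have -> : - (c / 2) = (G - c / 2) + - G by lra.
by rewrite expRD; apply: ler_wpM2r => //; exact: ltW (expR_gt0 _).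
Qed.

End Main.

Theorem corollary5 (R : realType) (m : nat) (p : 'I_m -> R) (k : nat) (delta : R) :
  (2 <= m)%N ->
  (forall i, 0 <= p i) -> \sum_(i < m) p i = 1 ->
  (1 <= k)%N ->
  0 < delta < 1 ->
  prob_Tk_le p k ((delta / expR 1) * nstar p k) <= delta /\
  1 - delta <= prob_Tk_le p k (Num.max (expR 1 ^+ 2) (2 * ln delta^-1) * nstar p k).
Proof.
move=> m2 p0 p1 k1 d.
split; first exact: part1.
case: k k1 => [//|[|K]] _; first exact: part2_1.
exact: part2.
Qed.
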